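(* Let $T$ be a split Leibniz triple system with symmetric root system $\Lambda^1$, suppose $\Lambda^0$ is symmetric, and fix $\alpha_0\in\Lambda^1$. Let $\alpha,\beta,\gamma\in\Lambda^1_{\alpha_0}\cup\{0\}$ with $\alpha+\beta+\gamma=0$, and let $\delta,\epsilon\in\Lambda^1\cup\{0\}$. Then: (1) if $\{\{T_\alpha,T_\beta,T_\gamma\},T_\delta,T_\epsilon\}\neq0$ then $\delta,\epsilon,\delta+\epsilon\in\Lambda^1_{\alpha_0}\cup\{0\}$; (2) if $\{T_\delta,\{T_\alpha,T_\beta,T_\gamma\},T_\epsilon\}\neq0$ then $\delta,\epsilon,\delta+\epsilon\in\Lambda^1_{\alpha_0}\cup\{0\}$; (3) if $\{T_\delta,T_\epsilon,\{T_\alpha,T_\beta,T_\gamma\}\}\neq0$ then $\delta,\epsilon,\delta+\epsilon\in\Lambda^1_{\alpha_0}\cup\{0\}$.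
   Context: A Leibniz triple system is a vector space $T$ over a field $\mathbb{K}$ with a trilinear product $\{\cdot,\cdot,\cdot\}$ satisfying, for all $a,b,c,d,e\in T$: $\{a,\{b,c,d\},e\}=\{\{a,b,c\},d,e\}-\{\{a,c,b\},d,e\}-\{\{a,d,b\},c,e\}+\{\{a,d,c\},b,e\}$ and $\{a,b,\{c,d,e\}\}=\{\{a,b,c\},d,e\}-\{\{a,b,d\},c,e\}-\{\{a,b,e\},c,d\}+\{\{a,b,e\},d,c\}$. Its standard embedding is the right Leibniz algebra $L=L^0\oplus L^1$ ($L^0$ the span of symbols $x\otimes y$, $L^1=T$) with product $[(x\otimes y,z),(u\otimes v,w)]=(\{x,y,u\}\otimes v-\{x,y,v\}\otimes u+z\otimes w,\ \{x,y,w\}+\{z,u,v\}-\{z,v,u\})$; so $[x,y]=x\otimes y$ and $\{x,y,z\}=[[x,y],z]$ for $x,y,z\in T$. Let $H^0$ be a maximal abelian subalgebra of $L^0$; for $\alpha\in(H^0)^*$ put $T_\alpha=\{t\in T:[t,h]=\alpha(h)t\ \forall h\in H^0\}$, $L^0_\alpha=\{v\in L^0:[v,h]=\alpha(h)v\ \forall h\in H^0\}$, $\Lambda^1=\{\alpha\neq0:T_\alpha\neq0\}$, $\Lambda^0=\{\alpha\neq0:L^0_\alpha\neq0\}$. $T$ is split (w.r.t. $H^0$) if $T=T_0\oplus\bigoplus_{\alpha\in\Lambda^1}T_\alpha$, $\{T_0,T_0,T_0\}=0$ and $\{T_\alpha,T_{-\alpha},T_0\}=0$ for all $\alpha\in\Lambda^1$.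 A set $\Lambda\subset(H^0)^*$ is symmetric if $\alpha\in\Lambda$ implies $-\alpha\in\Lambda$. Two roots $\alpha,\beta\in\Lambda^1$ are connected if there is a family $\alpha_1,\dots,\alpha_{2n+1}\in\Lambda^1\cup\{0\}$ with: $\alpha_1+\dots+\alpha_{2k+1}\in\Lambda^1$ for $k=0,\dots,n$; $\alpha_1+\dots+\alpha_{2k}\in\Lambda^0$ for $k=1,\dots,n$; $\alpha_1=\alpha$ and $\alpha_1+\dots+\alpha_{2n+1}\in\{\beta,-\beta\}$. $\Lambda^1_{\alpha_0}$ denotes the set of $\beta\in\Lambda^1$ connected with $\alpha_0$. *)

(* Defs.v *)
From HB Require Import structures.
From mathcomp Require Import all_boot all_order all_algebra.
Set Implicit Arguments. Unset Strict Implicit. Unset Printing Implicit Defensive.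
Import GRing.Theory.
Local Open Scope ring_scope.

Section LTS.
Variables (K : fieldType) (T : lmodType K) (tp : T -> T -> T -> T).

Definition isLTS : Prop :=
  (forall (c : K) x x' y z, tp (c *: x + x') y z = c *: tp x y z + tp x' y z) /\
  (forall (c : K) x y y' z, tp x (c *: y + y') z = c *: tp x y z + tp x y' z) /\
  (forall (c : K) x y z z', tp x y (c *: z + z') = c *: tp x y z + tp x y z') /\
  (forall a b c d e, tp a (tp b c d) e =
      tp (tp a b c) d e - tp (tp a c b) d e - tp (tp a d b) c e + tp (tp a d c) b e) /\
  (forall a b c d e, tp a b (tp c d e) =
      tp (tp a b c) d e - tp (tp a b d) c e - tp (tp a b e) c d + tp (tp a b e) d c).

(* Elements of L^0 are represented by finite sums  sum_i x_i (x) y_i,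
   i.e. by sequences of pairs (x_i, y_i); scalars are absorbed in x_i.
   Two representatives denote the same element of L^0 iff they act in the same
   way on T = L^1 from both sides (L^0 = (T (x) T)/K, K = the elements acting
   trivially on T in the standard embedding). *)
Definition L0 := seq (T * T).

Definition actl (s : L0) (w : T) : T := \sum_(p <- s) tp p.1 p.2 w.
(* [z, v] for z in T, v in L^0 *)
Definition actr (s : L0) (z : T) : T := \sum_(p <- s) (tp z p.1 p.2 - tp z p.2 p.1).

Definition eqL (s s' : L0) : Prop :=
  forall w, actl s w = actl s' w /\ actr s w = actr s' w.
Definition zeroL (s : L0) : Prop := eqL s [::].

Definition scaleL (c : K) (s : L0) : L0 := [seq (c *: p.1, p.2) | p <- s].

(* [x (x) y, u (x) v] = {x,y,u} (x) v - {x,y,v} (x) u, extended bilinearly *)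
Definition brL (s s' : L0) : L0 :=
  flatten [seq flatten [seq [:: (tp p.1 p.2 q.1, q.2); (- tp p.1 p.2 q.2, q.1)]
                        | q <- s'] | p <- s].

(* H is an abelian subalgebra of L^0 (as a predicate on representatives,
   invariant under the identification eqL). *)
Definition abSub (H : L0 -> Prop) : Prop :=
  H [::] /\
  (forall s s', H s -> eqL s s' -> H s') /\
  (forall s s', H s -> H s' -> H (s ++ s')) /\
  (forall c s, H s -> H (scaleL c s)) /\
  (forall s s', H s -> H s' -> H (brL s s')) /\
  (forall s s', H s -> H s' -> zeroL (brL s s')).

Definition maxAbSub (H : L0 -> Prop) : Prop :=
  abSub H /\ forall H', abSub H' -> (forall s, H s -> H' s) -> forall s, H' s -> H s.

(* Elements of (H^0)^*: linear functionals on H, represented canonically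
   (well defined on L^0-classes and set to 0 outside H). *)
Definition isDual (H : L0 -> Prop) (f : L0 -> K) : Prop :=
  (forall s, ~ H s -> f s = 0) /\
  (forall s s', H s -> eqL s s' -> f s = f s') /\
  (forall c s s', H s -> H s' -> f (scaleL c s ++ s') = c * f s + f s').

Definition f0 : L0 -> K := fun _ => 0.
Definition fadd (f g : L0 -> K) : L0 -> K := fun s => f s + g s.
Definition fopp (f : L0 -> K) : L0 -> K := fun s => - f s.
Definition psum (a : nat -> L0 -> K) (m : nat) : L0 -> K :=
  fun s => \sum_(i < m) a i s.

Definition rootT (H : L0 -> Prop) (f : L0 -> K) (t : T) : Prop :=
  forall h, H h -> actr h t = f h *: t.
Definition rootL0 (H : L0 -> Prop) (f : L0 -> K) (v : L0) : Prop :=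
  forall h, H h -> eqL (brL v h) (scaleL (f h) v).

Definition Lam1 (H : L0 -> Prop) (f : L0 -> K) : Prop :=
  isDual H f /\ f <> f0 /\ exists t, t <> 0 /\ rootT H f t.
Definition Lam0 (H : L0 -> Prop) (f : L0 -> K) : Prop :=
  isDual H f /\ f <> f0 /\ exists v, ~ zeroL v /\ rootL0 H f v.

Definition Lam1z (H : L0 -> Prop) (f : L0 -> K) : Prop := f = f0 \/ Lam1 H f.

Definition isSplit (H : L0 -> Prop) : Prop :=
  (forall t : T, exists (n : nat) (a : nat -> L0 -> K) (ts : nat -> T),
      (forall i, (i < n)%N -> Lam1z H (a i) /\ rootT H (a i) (ts i)) /\
      t = \sum_(i < n) ts i) /\
  (forall (n : nat) (a : nat -> L0 -> K) (ts : nat -> T),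
      (forall i j, (i < n)%N -> (j < n)%N -> i <> j -> a i <> a j) ->
      (forall i, (i < n)%N -> Lam1z H (a i) /\ rootT H (a i) (ts i)) ->
      \sum_(i < n) ts i = 0 -> forall i, (i < n)%N -> ts i = 0) /\
  (forall x y z, rootT H f0 x -> rootT H f0 y -> rootT H f0 z -> tp x y z = 0) /\
  (forall f x y z, Lam1 H f -> rootT H f x -> rootT H (fopp f) y -> rootT H f0 z ->
      tp x y z = 0).

Definition symmetricR (P : (L0 -> K) -> Prop) : Prop := forall f, P f -> P (fopp f).

(* a0 and b connected (indices shifted: a 0 = alpha_1, ..., a (2n) = alpha_{2n+1}) *)
Definition connected (H : L0 -> Prop) (a0 b : L0 -> K) : Prop :=
  exists (n : nat) (a : nat -> L0 -> K),
    (forall i, (i < (2 * n).+1)%N -> Lam1z H (a i)) /\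
    (forall k, (k <= n)%N -> Lam1 H (psum a (2 * k).+1)) /\
    (forall k, (1 <= k)%N -> (k <= n)%N -> Lam0 H (psum a (2 * k))) /\
    a 0%N = a0 /\
    (psum a (2 * n).+1 = b \/ psum a (2 * n).+1 = fopp b).

Definition Lam1conn (H : L0 -> Prop) (a0 b : L0 -> K) : Prop :=
  Lam1 H b /\ connected H a0 b.
Definition Lam1connz (H : L0 -> Prop) (a0 b : L0 -> K) : Prop :=
  b = f0 \/ Lam1conn H a0 b.

End LTS.

(* Main.v *)
Require Import Defs.
From HB Require Import structures.
From mathcomp Require Import all_boot all_order all_algebra.
From mathcomp Require Import ring zify.
From Stdlib Require Import Classical FunctionalExtensionality.
Import GRing.Theory.
Set Implicit Arguments. Unset Strict Implicit. Unset Printing Implicit Defensive.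
Local Open Scope ring_scope.

Inductive zx := ZA of nat | ZP of zx & zx | ZN of zx | Z0.
Definition zev (V : zmodType) (env : seq V) : zx -> V :=
  fix zv e := match e with ZA n => nth 0 env n | ZP a b => zv a + zv b
  | ZN a => - zv a | Z0 => 0 end.
Arguments zev {V} env _.
Fixpoint zco (e : zx) (i : nat) : int :=
  match e with ZA n => (n == i)%:Z | ZP a b => zco a i + zco b i
  | ZN a => - zco a i | Z0 => 0 end.
Fixpoint zok (N : nat) (e : zx) : bool :=
  match e with ZA n => (n < N)%N | ZP a b => zok N a && zok N b
  | ZN a => zok N a | Z0 => true end.

Lemma zev_sum {V : zmodType} (env : seq V) N e : zok N e ->
  zev env e = \sum_(i < N) (nth 0 env i) *~ zco e i.
Proof.
elim: e => [n|a IHa b IHb|a IHa|] /=.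
- move=> Hn. rewrite (bigD1 (Ordinal Hn)) //= eqxx mulr1z big1 ?addr0 //.
  move=> i /eqP Hi; have -> : (n == i) = false.
    by apply/negbTE/eqP => E; apply: Hi; apply: val_inj; rewrite /= E.
  by rewrite mulr0z.
- move=> /andP [Ha Hb]; rewrite IHa // IHb // -big_split /=.
  by apply: eq_bigr => i _; rewrite mulrzDr.
- move=> Ha; rewrite IHa // -sumrN; apply: eq_bigr => i _; by rewrite mulrNz.
- move=> _; by rewrite big1 // => i _; rewrite mulr0z.
Qed.

Lemma zsound (V : zmodType) (env : seq V) e1 e2 :
  zok (size env) e1 && zok (size env) e2 &&
  all (fun i => zco e1 i == zco e2 i) (iota 0 (size env)) ->
  zev env e1 = zev env e2.
Proof.
move=> /andP [/andP [H1 H2] /allP H].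
rewrite (@zev_sum V env _ e1 H1) (@zev_sum V env _ e2 H2); apply: eq_bigr => i _.
by rewrite (eqP (H i _)) // mem_iota /= add0n ltn_ord.
Qed.

Ltac zadd t env := lazymatch env with
 | nil => constr:(t :: nil)
 | (t :: _) => env
 | (?x :: ?r) => let r' := zadd t r in constr:(x :: r')
 end.
Ltac zcollect t env := lazymatch t with
 | (?a + ?b)%R => let env := zcollect a env in zcollect b env
 | (- ?a)%R => zcollect a env
 | 0%R => env
 | _ => zadd t env end.
Ltac zindex t env := lazymatch env with
 | (t :: _) => constr:(0%N)
 | (_ :: ?r) => let n := zindex t r in constr:(S n)
 end.
Ltac zreify t env := lazymatch t with
 | (?a + ?b)%R => let ra := zreify a env in let rb := zreify b env in constr:(ZP ra rb)
 | (- ?a)%R => let ra := zreify a env in constr:(ZN ra)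
 | 0%R => constr:(Z0)
 | _ => let n := zindex t env in constr:(ZA n) end.
Ltac zmod_eq := lazymatch goal with |- ?L = ?R =>
 let T := type of L in
 let env := zcollect L (@nil T) in let env := zcollect R env in
 let eL := zreify L env in let eR := zreify R env in
 change (zev env eL = zev env eR); apply: zsound; vm_compute; reflexivity end.

Section Alg.
Variables (K : fieldType) (T : lmodType K) (tp : T -> T -> T -> T).
Hypothesis HL : isLTS tp.

Lemma tp0l y z : tp 0 y z = 0.
Proof. have := HL.1 1 0 0 y z; rewrite !scale1r addr0 => E; apply: (addrI (tp 0 y z)); by rewrite addr0 -E. Qed.
Lemma tp0m x z : tp x 0 z = 0.
Proof. have := HL.2.1 1 x 0 0 z; rewrite !scale1r addr0 => E; apply: (addrI (tp x 0 z)); by rewrite addr0 -E. Qed.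
Lemma tp0r x y : tp x y 0 = 0.
Proof. have := HL.2.2.1 1 x y 0 0; rewrite !scale1r addr0 => E; apply: (addrI (tp x y 0)); by rewrite addr0 -E. Qed.
Lemma tpZl c x y z : tp (c *: x) y z = c *: tp x y z.
Proof. by have := HL.1 c x 0 y z; rewrite !addr0 tp0l addr0. Qed.
Lemma tpZm c x y z : tp x (c *: y) z = c *: tp x y z.
Proof. by have := HL.2.1 c x y 0 z; rewrite !addr0 tp0m addr0. Qed.
Lemma tpZr c x y z : tp x y (c *: z) = c *: tp x y z.
Proof. by have := HL.2.2.1 c x y z 0; rewrite !addr0 tp0r addr0. Qed.
Lemma tpDl x x' y z : tp (x + x') y z = tp x y z + tp x' y z.
Proof. by have := HL.1 1 x x' y z; rewrite !scale1r. Qed.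
Lemma tpDm x y y' z : tp x (y + y') z = tp x y z + tp x y' z.
Proof. by have := HL.2.1 1 x y y' z; rewrite !scale1r. Qed.
Lemma tpDr x y z z' : tp x y (z + z') = tp x y z + tp x y z'.
Proof. by have := HL.2.2.1 1 x y z z'; rewrite !scale1r. Qed.
Lemma tpNl x y z : tp (- x) y z = - tp x y z.
Proof. by rewrite -scaleN1r tpZl scaleN1r. Qed.
Lemma tpNm x y z : tp x (- y) z = - tp x y z.
Proof. by rewrite -scaleN1r tpZm scaleN1r. Qed.
Lemma tpNr x y z : tp x y (- z) = - tp x y z.
Proof. by rewrite -scaleN1r tpZr scaleN1r. Qed.
Lemma I1 a b c d e : tp a (tp b c d) e =
      tp (tp a b c) d e - tp (tp a c b) d e - tp (tp a d b) c e + tp (tp a d c) b e.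
Proof. exact: HL.2.2.2.1. Qed.
Lemma I2 a b c d e : tp a b (tp c d e) =
      tp (tp a b c) d e - tp (tp a b d) c e - tp (tp a b e) c d + tp (tp a b e) d c.
Proof. exact: HL.2.2.2.2. Qed.

Definition ar (p q z : T) := tp z p q - tp z q p.

Ltac tnorm := rewrite /ar ?(tpDl, tpDm, tpDr, tpNl, tpNm, tpNr);
  rewrite ?(I1, I2); rewrite ?(tpDl, tpDm, tpDr, tpNl, tpNm, tpNr).

Lemma Der u v x y z : ar u v (tp x y z) = tp (ar u v x) y z + tp x (ar u v y) z + tp x y (ar u v z).
Proof. tnorm. zmod_eq. Qed.
Lemma L1p p q u v w : tp (tp p q u) v w - tp (tp p q v) u w = ar u v (tp p q w) - tp p q (ar u v w).
Proof. tnorm. zmod_eq. Qed.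
Lemma L2p p q u v z : (tp z (tp p q u) v - tp z v (tp p q u)) + (tp z (- tp p q v) u - tp z u (- tp p q v))
   = ar u v (ar p q z) - ar p q (ar u v z).
Proof. tnorm. zmod_eq. Qed.
Lemma Id1d a b c d e : tp (tp a b c) d e = tp a b (tp c d e) + tp (tp a b d) c e + ar c d (tp a b e).
Proof. tnorm. zmod_eq. Qed.
Lemma IdC a b c d e : ar d e (tp a b c) = tp (tp a b d) e c - tp (tp a b e) d c + tp a b (ar d e c).
Proof. tnorm. zmod_eq. Qed.
Lemma Id2d a b c d e : tp d (tp a b c) e = tp (ar a b d) c e - (tp (tp d c a) b e - tp (tp d c b) a e).
Proof. tnorm. zmod_eq. Qed.
Lemma IdB a b c d e : ar (tp a b c) e d = ar (tp a b e) c d + ar c e (ar a b d) - ar a b (ar c e d).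
Proof. tnorm. zmod_eq. Qed.
Lemma IdJ3 a b c d e : tp d e (tp a b c) = tp (ar a b d) e c + tp d (ar a b e) c - ar a b (tp d e c).
Proof. tnorm. zmod_eq. Qed.
Lemma IdR3 p q r : tp p q r = tp p r q + ar q r p.
Proof. rewrite /ar. zmod_eq. Qed.

End Alg.


Section Roots.
Variables (K : fieldType) (T : lmodType K) (tp : T -> T -> T -> T).
Hypothesis HL : isLTS tp.
Variable H : L0 T -> Prop.

Lemma actl1 p q w : actl tp [:: (p, q)] w = tp p q w.
Proof. by rewrite /actl big_seq1. Qed.
Lemma actr1 p q z : actr tp [:: (p, q)] z = ar tp p q z.
Proof. by rewrite /actr big_seq1. Qed.
Lemma actr_nil z : actr tp [::] z = 0.
Proof. by rewrite /actr big_nil. Qed.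
Lemma actr_cons pq h z : actr tp (pq :: h) z = ar tp pq.1 pq.2 z + actr tp h z.
Proof. by rewrite /actr big_cons. Qed.

Lemma actrD h x y : actr tp h (x + y) = actr tp h x + actr tp h y.
Proof.
elim: h => [|pq h IH]; first by rewrite !actr_nil addr0.
rewrite !actr_cons IH /ar !(tpDl HL); zmod_eq.
Qed.
Lemma actrZ h c x : actr tp h (c *: x) = c *: actr tp h x.
Proof.
elim: h => [|pq h IH]; first by rewrite !actr_nil scaler0.
by rewrite !actr_cons IH /ar !(tpZl HL) scalerDr scalerBr.
Qed.
Lemma actrN h x : actr tp h (- x) = - actr tp h x.
Proof. by rewrite -scaleN1r actrZ scaleN1r. Qed.

Lemma DerH h x y z : actr tp h (tp x y z) =
  tp (actr tp h x) y z + tp x (actr tp h y) z + tp x y (actr tp h z).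
Proof.
elim: h => [|pq h IH].
  by rewrite !actr_nil (tp0l HL) (tp0m HL) (tp0r HL) !addr0.
rewrite !actr_cons IH (Der HL) !(tpDl HL, tpDm HL, tpDr HL); zmod_eq.
Qed.

Lemma rootT_tp f g k x y z : rootT tp H f x -> rootT tp H g y -> rootT tp H k z ->
  rootT tp H (fadd (fadd f g) k) (tp x y z).
Proof.
move=> Hx Hy Hz h Hh; rewrite DerH Hx // Hy // Hz // (tpZl HL) (tpZm HL) (tpZr HL).
by rewrite /fadd !scalerDl.
Qed.
Lemma rootT_sub f x y : rootT tp H f x -> rootT tp H f y -> rootT tp H f (x - y).
Proof. by move=> Hx Hy h Hh; rewrite actrD actrN Hx // Hy // scalerBr. Qed.
Lemma rootT_ext f g t : (forall s, f s = g s) -> rootT tp H f t -> rootT tp H g t.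
Proof. by move=> E Ht h Hh; rewrite Ht // E. Qed.
Lemma rootT_ar f g k p q z : rootT tp H f p -> rootT tp H g q -> rootT tp H k z ->
  rootT tp H (fadd (fadd k f) g) (ar tp p q z).
Proof.
move=> Hp Hq Hz; apply: rootT_sub; first exact: rootT_tp.
apply: (@rootT_ext (fadd (fadd k g) f)); last exact: rootT_tp.
by move=> s; rewrite /fadd; ring.
Qed.

Definition blist (p q : T) (h : L0 T) : L0 T :=
  flatten [seq [:: (tp p q r.1, r.2); (- tp p q r.2, r.1)] | r <- h].
Lemma brL1 p q h : brL tp [:: (p, q)] h = blist p q h.
Proof. by rewrite /brL /= cats0. Qed.

Lemma actl_blist p q h w : actl tp (blist p q h) w = actr tp h (tp p q w) - tp p q (actr tp h w).
Proof.
elim: h => [|r h IH]; first by rewrite /actl /blist /= big_nil actr_nil actr_nil (tp0r HL) subr0.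
rewrite /blist /= -/(blist p q h) /actl !big_cons /= -/(actl tp (blist p q h) w) IH.
rewrite !actr_cons (tpDr HL) (tpNl HL).
have := L1p HL p q r.1 r.2 w; rewrite -/(ar tp r.1 r.2 (tp p q w)) => E.
move: E; set A := tp (tp p q r.1) r.2 w; set B := tp (tp p q r.2) r.1 w => E.
rewrite [X in X = _](_ : _ = (A - B) + (actr tp h (tp p q w) - tp p q (actr tp h w))); last by zmod_eq.
rewrite E; zmod_eq.
Qed.

Lemma actr_blist p q h z : actr tp (blist p q h) z = actr tp h (ar tp p q z) - ar tp p q (actr tp h z).
Proof.
elim: h => [|r h IH]; first by rewrite /blist /= !actr_nil /ar !(tp0l HL) !subrr.
rewrite /blist /= -/(blist p q h) !actr_cons /= IH.
have := L2p HL p q r.1 r.2 z => E.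
have -> : ar tp p q (ar tp r.1 r.2 z + actr tp h z) = ar tp p q (ar tp r.1 r.2 z) + ar tp p q (actr tp h z).
  by rewrite /ar !(tpDl HL); zmod_eq.
rewrite /ar in E *. rewrite addrA.
set X1 := (tp z (tp p q r.1) r.2 - tp z r.2 (tp p q r.1)).
set X2 := (tp z (- tp p q r.2) r.1 - tp z r.1 (- tp p q r.2)).
have -> : X1 + X2 = tp (tp z p q - tp z q p) r.1 r.2 - tp (tp z p q - tp z q p) r.2 r.1 -
     (tp (tp z r.1 r.2 - tp z r.2 r.1) p q - tp (tp z r.1 r.2 - tp z r.2 r.1) q p) by exact: E.
zmod_eq.
Qed.

Lemma rootL0_pair f g p q : rootT tp H f p -> rootT tp H g q ->
  rootL0 tp H (fadd f g) [:: (p, q)].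
Proof.
move=> Hp Hq h Hh w; rewrite brL1 /scaleL /= actl_blist actr_blist actl1 actr1.
split.
- rewrite DerH Hp // Hq // /fadd !(tpZl HL, tpZm HL, tpDl HL) !scalerDl; zmod_eq.
- rewrite /ar actrD actrN !DerH !Hp // !Hq // /fadd.
  rewrite !(tpZl HL, tpZm HL, tpZr HL, tpDl HL, tpDm HL, tpDr HL, tpNl HL, tpNm HL, tpNr HL) !scalerDl.
  rewrite ?scalerBr; zmod_eq.
Qed.

Definition link (p q : T) := ~ zeroL tp [:: (p, q)].
Lemma link_l p q w : tp p q w <> 0 -> link p q.
Proof. by move=> Hn Z; apply: Hn; have [E _] := Z w; move: E; rewrite actl1 /actl big_nil. Qed.
Lemma link_r p q z : ar tp p q z <> 0 -> link p q.
Proof. by move=> Hn Z; apply: Hn; have [_ E] := Z z; move: E; rewrite actr1 actr_nil. Qed.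

End Roots.


Ltac fext := apply: functional_extensionality => ?; rewrite /fadd /fopp /f0 /=; ring.

Section Conn.
Variables (K : fieldType) (T : lmodType K) (tp : T -> T -> T -> T).
Hypothesis HL : isLTS tp.
Variable H : L0 T -> Prop.
Hypothesis HS1 : symmetricR (Lam1 tp H).
Hypothesis HS0 : symmetricR (Lam0 tp H).
Variable a0 : L0 T -> K.

Local Notation F0 := (@f0 K T).

Lemma isDual_f0 : isDual tp H (@f0 K T).
Proof. by split; [|split] => //= *; rewrite /f0 mulr0 addr0. Qed.
Lemma isDual_add f g : isDual tp H f -> isDual tp H g -> isDual tp H (fadd f g).
Proof.
move=> [F1 [F2 F3]] [G1 [G2 G3]]; split; [|split].
- by move=> s Hs; rewrite /fadd F1 // G1 // addr0.
- by move=> s s' Hs E; rewrite /fadd (F2 s s') // (G2 s s').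
- by move=> c s s' Hs Hs'; rewrite /fadd F3 // G3 //; ring.
Qed.
Lemma isDual_opp f : isDual tp H f -> isDual tp H (fopp f).
Proof.
move=> [F1 [F2 F3]]; split; [|split].
- by move=> s Hs; rewrite /fopp F1 // oppr0.
- by move=> s s' Hs E; rewrite /fopp (F2 s s').
- by move=> c s s' Hs Hs'; rewrite /fopp F3 //; ring.
Qed.
Lemma Lam1z_dual f : Lam1z tp H f -> isDual tp H f.
Proof. by case=> [->|[]]; [exact: isDual_f0|]. Qed.
Lemma Lam1z_vec f t : isDual tp H f -> t <> 0 -> rootT tp H f t -> Lam1z tp H f.
Proof.
move=> Hd Ht Hr; case: (classic (f = F0)) => [E|E]; [by left|right].
by split=> //; split=> //; exists t.
Qed.
Lemma Lam0_link f g p q : isDual tp H f -> isDual tp H g -> fadd f g <> F0 ->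
  rootT tp H f p -> rootT tp H g q -> link tp p q -> Lam0 tp H (fadd f g).
Proof.
move=> Hf Hg Hn Hp Hq Hl; split; first exact: isDual_add.
split=> //; exists [:: (p, q)]; split=> //; exact: rootL0_pair.
Qed.
Lemma fopp_f0 : fopp (@f0 K T) = F0.
Proof. fext. Qed.
Lemma fopp_opp (f : L0 T -> K) : fopp (fopp f) = f.
Proof. fext. Qed.
Lemma Lam1z_opp f : Lam1z tp H f -> Lam1z tp H (fopp f).
Proof. by case=> [->|Hf]; [left; exact: fopp_f0|right; exact: HS1]. Qed.

Lemma psum_eq (a a' : nat -> L0 T -> K) m :
  (forall i, (i < m)%N -> a' i = a i) -> psum a' m = psum a m.
Proof. move=> E; apply: functional_extensionality => s; rewrite /psum.
by apply: eq_bigr => i _; rewrite E. Qed.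
Lemma psumS (a : nat -> L0 T -> K) m : psum a m.+1 = fadd (psum a m) (a m).
Proof. apply: functional_extensionality => s; by rewrite /psum /fadd big_ord_recr. Qed.

Lemma chain_ext n (a : nat -> L0 T -> K) lam nu rho :
  (forall i, (i < (2 * n).+1)%N -> Lam1z tp H (a i)) ->
  (forall k, (k <= n)%N -> Lam1 tp H (psum a (2 * k).+1)) ->
  (forall k, (1 <= k)%N -> (k <= n)%N -> Lam0 tp H (psum a (2 * k))) ->
  psum a (2 * n).+1 = lam -> Lam1z tp H nu -> Lam1z tp H rho ->
  Lam0 tp H (fadd lam nu) -> Lam1 tp H (fadd (fadd lam nu) rho) ->
  exists a' : nat -> L0 T -> K,
  (forall i, (i < (2 * n.+1).+1)%N -> Lam1z tp H (a' i)) /\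
  (forall k, (k <= n.+1)%N -> Lam1 tp H (psum a' (2 * k).+1)) /\
  (forall k, (1 <= k)%N -> (k <= n.+1)%N -> Lam0 tp H (psum a' (2 * k))) /\
  a' 0%N = a 0%N /\ psum a' (2 * n.+1).+1 = fadd (fadd lam nu) rho.
Proof.
move=> H1 H2 H3 Hf Hnu Hrho H0 Hl.
pose a' := fun i => if (i < (2 * n).+1)%N then a i else if i == (2 * n).+1 then nu else rho.
have Hpre : forall m, (m <= (2 * n).+1)%N -> psum a' m = psum a m.
  move=> m Hm; apply: psum_eq => i Hi; rewrite /a'.
  by have -> : (i < (2 * n).+1)%N by apply: leq_trans Hi Hm.
have Hm1 : psum a' (2 * n).+2 = fadd lam nu.
  by rewrite psumS Hpre // Hf /a' ltnn eqxx.
have Hm2 : psum a' (2 * n).+3 = fadd (fadd lam nu) rho.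
  rewrite psumS Hm1 /a'. have -> : ((2 * n).+2 < (2 * n).+1)%N = false by lia.
  by have -> : ((2 * n).+2 == (2 * n).+1) = false by lia.
have E2 : (2 * n.+1 = (2 * n).+2)%N by lia.
exists a'; split; [|split; [|split; [|split]]].
- move=> i Hi; rewrite /a'; case: ifP => [Hi'|_]; first exact: H1.
  by case: ifP.
- move=> k Hk; case: (leqP k n) => Hkn.
    rewrite Hpre; [exact: H2|lia].
  have -> : k = n.+1 by lia.
  by rewrite E2 Hm2.
- move=> k Hk1 Hk; case: (leqP k n) => Hkn.
    rewrite Hpre; [exact: H3|lia].
  have -> : k = n.+1 by lia.
  by rewrite E2 Hm1.
- by rewrite /a'.
- by rewrite E2 Hm2.
Qed.

Lemma conn_ext lam nu rho : connected tp H a0 lam -> Lam1z tp H nu -> Lam1z tp H rho ->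
  Lam0 tp H (fadd lam nu) -> Lam1 tp H (fadd (fadd lam nu) rho) ->
  connected tp H a0 (fadd (fadd lam nu) rho).
Proof.
move=> [n [a [H1 [H2 [H3 [H4 [H5|H5]]]]]]] Hnu Hrho H0 Hl.
- have [a' [G1 [G2 [G3 [G4 G5]]]]] := chain_ext H1 H2 H3 H5 Hnu Hrho H0 Hl.
  exists n.+1, a'; do 4 (split => //); by [rewrite G4|left].
- have E0 : fadd (fopp lam) (fopp nu) = fopp (fadd lam nu) by fext.
  have E1 : fadd (fadd (fopp lam) (fopp nu)) (fopp rho) = fopp (fadd (fadd lam nu) rho) by fext.
  have [a' [G1 [G2 [G3 [G4 G5]]]]] := chain_ext H1 H2 H3 H5 (Lam1z_opp Hnu) (Lam1z_opp Hrho)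
     (eq_ind_r _ (HS0 H0) E0) (eq_ind_r _ (HS1 Hl) E1).
  exists n.+1, a'; do 4 (split => //); first by rewrite G4.
  by right; rewrite G5 E1.
Qed.

Definition S f := Lam1connz tp H a0 f.

Lemma S_f0 : S F0. Proof. by left. Qed.
Lemma S_Lam1 f : S f -> f <> F0 -> Lam1 tp H f.
Proof. by case=> [->|[]]. Qed.
Lemma S_opp f : S f -> S (fopp f).
Proof.
case=> [->|[Hl [n [a [H1 [H2 [H3 [H4 H5]]]]]]]]; first by rewrite fopp_f0; left.
right; split; first exact: HS1.
exists n, a; do 4 (split => //).
by case: H5 => E; [right; rewrite fopp_opp|left].
Qed.
Lemma S_ext lam nu rho : S lam -> lam <> F0 -> Lam1z tp H nu -> Lam1z tp H rho ->
  Lam0 tp H (fadd lam nu) -> Lam1z tp H (fadd (fadd lam nu) rho) ->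
  S (fadd (fadd lam nu) rho).
Proof.
move=> Hs Hn Hnu Hrho H0 [E|Hl]; first by rewrite E; left.
right; split => //; apply: conn_ext => //.
by case: Hs => [//|[]].
Qed.

Lemma S_hop mu rho : S mu -> mu <> F0 -> Lam0 tp H mu -> Lam1z tp H rho ->
  Lam1z tp H (fadd mu rho) -> S (fadd mu rho).
Proof.
move=> Hs Hn H0 Hr Hl.
have E : fadd mu F0 = mu by fext.
have := @S_ext mu F0 rho Hs Hn (or_introl erefl) Hr; rewrite E; exact.
Qed.

Lemma S_link lam nu p q : S lam -> lam <> F0 -> Lam1z tp H nu ->
  rootT tp H lam p -> rootT tp H nu q -> (link tp p q \/ link tp q p) -> S nu.
Proof.
move=> Hs Hn Hnu Hp Hq Hlk.
have Hdl : isDual tp H lam by case: (S_Lam1 Hs Hn).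
have Hdn := Lam1z_dual Hnu.
case: (classic (fadd lam nu = F0)) => Hz.
  have -> : nu = fopp lam.
    apply: functional_extensionality => s; have := congr1 (fun F => F s) Hz.
    rewrite /fadd /fopp /f0 => /eqP; rewrite addrC addr_eq0 => /eqP ->; by [].
  exact: S_opp.
have H0 : Lam0 tp H (fadd lam nu).
  case: Hlk => Hlk; first exact: (Lam0_link Hdl Hdn Hz Hp Hq Hlk).
  have -> : fadd lam nu = fadd nu lam by fext.
  apply: (Lam0_link Hdn Hdl _ Hq Hp Hlk).
  by have -> : fadd nu lam = fadd lam nu by fext.
have E : fadd (fadd lam nu) (fopp lam) = nu by fext.
have := @S_ext lam nu (fopp lam) Hs Hn Hnu (Lam1z_opp (or_intror (S_Lam1 Hs Hn))) H0.
by rewrite E; apply.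
Qed.

End Conn.


Lemma nzD (V : zmodType) (x y : V) : x + y <> 0 -> x <> 0 \/ y <> 0.
Proof. by move=> Hn; case: (classic (x = 0)) => [E|E]; [right; move: Hn; rewrite E add0r|left]. Qed.
Lemma nzB (V : zmodType) (x y : V) : x - y <> 0 -> x <> 0 \/ y <> 0.
Proof. move=> /nzD [|Hy]; [by left|right => E; apply: Hy; by rewrite E oppr0]. Qed.

Section Main.
Variables (K : fieldType) (T : lmodType K) (tp : T -> T -> T -> T).
Hypothesis HL : isLTS tp.
Variable H : L0 T -> Prop.
Hypothesis HSp : isSplit tp H.
Hypothesis HS1 : symmetricR (Lam1 tp H).
Hypothesis HS0 : symmetricR (Lam0 tp H).
Variables (a0 al be ga : L0 T -> K).
Local Notation F0 := (@f0 K T).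
Local Notation S := (S tp H a0).
Hypothesis Hal : S al.
Hypothesis Hbe : S be.
Hypothesis Hga : S ga.
Hypothesis Hsum : fadd (fadd al be) ga = F0.
Variables (a b c : T).
Hypothesis Ra : rootT tp H al a.
Hypothesis Rb : rootT tp H be b.
Hypothesis Rc : rootT tp H ga c.
Hypothesis Hx : tp a b c <> 0.

Lemma tp_nz1 p q r : tp p q r <> 0 -> p <> 0.
Proof. by move=> Hn E; apply: Hn; rewrite E (tp0l HL). Qed.
Lemma tp_nz2 p q r : tp p q r <> 0 -> q <> 0.
Proof. by move=> Hn E; apply: Hn; rewrite E (tp0m HL). Qed.
Lemma tp_nz3 p q r : tp p q r <> 0 -> r <> 0.
Proof. by move=> Hn E; apply: Hn; rewrite E (tp0r HL). Qed.
Lemma ar_nz1 p q z : ar tp p q z <> 0 -> p <> 0.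
Proof. by move=> Hn E; apply: Hn; rewrite /ar E (tp0m HL) (tp0r HL) subrr. Qed.
Lemma ar_nz3 p q z : ar tp p q z <> 0 -> z <> 0.
Proof. by move=> Hn E; apply: Hn; rewrite /ar E !(tp0l HL) subrr. Qed.

Lemma Hg s : ga s = - (al s + be s).
Proof. have := congr1 (fun F => F s) Hsum; rewrite /fadd /f0 => /eqP.
by rewrite addrC addr_eq0 => /eqP. Qed.

Ltac pw := move=> ?; rewrite /fadd /fopp /f0 ?Hg; ring.

Lemma dual_of f : S f -> isDual tp H f.
Proof. case=> [->|[[]]] //; exact: isDual_f0. Qed.
Lemma Lz_of f : S f -> Lam1z tp H f.
Proof. by case=> [->|[]]; [left|right]. Qed.

Lemma ga_nz : ga <> F0.
Proof.
move=> Eg; apply: Hx.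
have Eb : forall s, be s = - al s.
  move=> s; have := Hg s; rewrite Eg /f0 => /eqP; rewrite eq_sym oppr_eq0 addr_eq0 => /eqP ->; by rewrite opprK.
have [_ [_ [H3 H4]]] := HSp.
case: (classic (al = F0)) => Ea.
  apply: (H3 a b c); [by rewrite -Ea|apply: (rootT_ext _ Rb) => s; by rewrite Eb Ea /f0 oppr0|by rewrite -Eg].
apply: (H4 al) => //; first exact: (S_Lam1 Hal Ea).
  by apply: (rootT_ext _ Rb) => s; rewrite Eb.
by rewrite -Eg.
Qed.

Lemma fopp_nz f : f <> F0 -> fopp f <> F0.
Proof. by move=> Hn E; apply: Hn; rewrite -(fopp_opp f) E fopp_f0. Qed.

Lemma L0go : Lam0 tp H (fopp ga).
Proof.
have E : fadd al be = fopp ga by apply: functional_extensionality; pw.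
rewrite -E; apply: (Lam0_link HL (dual_of Hal) (dual_of Hbe) _ Ra Rb (link_l Hx)).
by rewrite E; apply: fopp_nz; exact: ga_nz.
Qed.
Lemma L0g : Lam0 tp H ga.
Proof. by rewrite -(fopp_opp ga); apply: HS0; exact: L0go. Qed.

Lemma Sgo : S (fopp ga). Proof. exact: S_opp HS1 _ _ Hga. Qed.

Lemma RuleG nu f t : Lam1z tp H nu -> t <> 0 -> rootT tp H f t ->
  (forall s, f s = nu s - ga s) -> S nu.
Proof.
move=> Hnu Ht Hr Ef.
have Hr' : rootT tp H (fadd nu (fopp ga)) t by apply: (rootT_ext _ Hr) => s; rewrite Ef.
have Hd := isDual_add (Lam1z_dual Hnu) (isDual_opp (dual_of Hga)).
have E : fadd ga (fadd nu (fopp ga)) = nu by apply: functional_extensionality; pw.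
have := S_hop HS1 HS0 Hga ga_nz L0g (Lam1z_vec Hd Ht Hr'); rewrite E; exact.
Qed.
Lemma RuleGp nu f t : Lam1z tp H nu -> t <> 0 -> rootT tp H f t ->
  (forall s, f s = nu s + ga s) -> S nu.
Proof.
move=> Hnu Ht Hr Ef.
have Hr' : rootT tp H (fadd nu ga) t by apply: (rootT_ext _ Hr) => s; rewrite Ef.
have Hd := isDual_add (Lam1z_dual Hnu) (dual_of Hga).
have E : fadd (fopp ga) (fadd nu ga) = nu by apply: functional_extensionality; pw.
have := S_hop HS1 HS0 Sgo (fopp_nz ga_nz) L0go (Lam1z_vec Hd Ht Hr'); rewrite E; exact.
Qed.

Lemma SlinkG nu p q : Lam1z tp H nu -> rootT tp H ga p -> rootT tp H nu q ->
  (link tp p q \/ link tp q p) -> S nu.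
Proof. move=> *; apply: (S_link HL HS1 HS0 Hga ga_nz); eauto. Qed.
Lemma SlinkGo nu p q : Lam1z tp H nu -> rootT tp H (fopp ga) p -> rootT tp H nu q ->
  (link tp p q \/ link tp q p) -> S nu.
Proof. move=> *; apply: (S_link HL HS1 HS0 Sgo (fopp_nz ga_nz)); eauto. Qed.



Lemma Rx : rootT tp H F0 (tp a b c).
Proof. by rewrite -Hsum; apply: rootT_tp. Qed.

Lemma p1_first d e f g : Lam1z tp H f -> rootT tp H f d -> rootT tp H g e ->
  tp (tp a b c) d e <> 0 -> S f.
Proof.
move=> Hf Rd Re Hn.
case: (classic (f = F0)) => [->|Hf0]; first exact: S_f0.
move: Hn; rewrite (Id1d HL) => /nzD [/nzD [Hn|Hn]|Hn].
- have Hcde := tp_nz3 Hn.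
  by apply: (SlinkG Hf Rc Rd); left; apply: link_l Hcde.
- apply: (RuleG Hf (tp_nz1 Hn) (rootT_tp HL Ra Rb Rd)); pw.
- by apply: (SlinkG Hf Rc Rd); left; apply: link_r Hn.
Qed.

Lemma p1_second d e f g : Lam1z tp H f -> Lam1z tp H g -> rootT tp H f d -> rootT tp H g e ->
  tp (tp a b c) d e <> 0 -> S g.
Proof.
move=> Hf Hg' Rd Re Hn0.
case: (classic (g = F0)) => [->|Hg0]; first exact: S_f0.
have Hn := Hn0; move: Hn; rewrite (IdR3 tp (tp a b c) d e) => /nzD [Hn|Hn].
  exact: (p1_first Hg' Re Rd Hn).
case: (classic (f = F0)) => [Ef|Hf0]; last first.
  have Sf := p1_first Hf Rd Re Hn0.
  by apply: (S_link HL HS1 HS0 Sf Hf0 Hg' Rd Re); left; apply: link_r Hn.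
subst f.
move: Hn; rewrite (IdC HL) => /nzD [/nzB [Hn|Hn]|Hn].
- have Rw : rootT tp H (fopp ga) (tp a b d).
    by apply: (rootT_ext _ (rootT_tp HL Ra Rb Rd)); pw.
  by apply: (SlinkGo Hg' Rw Re); left; apply: link_l Hn.
- apply: (RuleG Hg' (tp_nz1 Hn) (rootT_tp HL Ra Rb Re)); pw.
- have := tp_nz3 Hn; rewrite /ar => /nzB [Hm|Hm].
    apply: (RuleGp Hg' Hm (rootT_tp HL Rc Rd Re)); pw.
  by apply: (SlinkG Hg' Rc Re); left; apply: link_l Hm.
Qed.

Lemma p1_sum d e f g : Lam1z tp H f -> Lam1z tp H g -> rootT tp H f d -> rootT tp H g e ->
  tp (tp a b c) d e <> 0 -> S (fadd f g).
Proof.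
move=> Hf Hg' Rd Re Hn.
case: (classic (f = F0)) => [Ef|Hf0].
  have -> : fadd f g = g by apply: functional_extensionality; rewrite Ef; pw.
  exact: (p1_second Hf Hg' Rd Re Hn).
case: (classic (g = F0)) => [Eg|Hg0].
  have -> : fadd f g = f by apply: functional_extensionality; rewrite Eg; pw.
  exact: (p1_first Hf Rd Re Hn).
have Ef : fadd F0 f = f by apply: functional_extensionality; pw.
have L0f : Lam0 tp H f.
  rewrite -Ef; apply: (Lam0_link HL (@isDual_f0 _ _ tp H) (Lam1z_dual Hf) _ Rx Rd (link_l Hn)).
  by rewrite Ef.
have Rs : rootT tp H (fadd f g) (tp (tp a b c) d e).
  by apply: (rootT_ext _ (rootT_tp HL Rx Rd Re)); pw.
apply: (S_hop HS1 HS0 (p1_first Hf Rd Re Hn) Hf0 L0f Hg').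
exact: (Lam1z_vec (isDual_add (Lam1z_dual Hf) (Lam1z_dual Hg')) Hn Rs).
Qed.


Lemma p3 d e f g : Lam1z tp H f -> Lam1z tp H g -> rootT tp H f d -> rootT tp H g e ->
  tp d e (tp a b c) <> 0 -> S f /\ S g.
Proof.
move=> Hf Hg' Rd Re Hn0.
have Lde : link tp d e := link_l Hn0.
have Hn := Hn0; move: Hn; rewrite (IdJ3 HL) => /nzB [/nzD [T1|T2]|T3].
all: case: (classic (f = F0)) => [Ef|Hf0]; case: (classic (g = F0)) => [Eg|Hg0].
all: try by (split; [rewrite Ef; exact: S_f0|rewrite Eg; exact: S_f0]).
all: try (subst f; split; [exact: S_f0|]).
all: try (subst g; split; [|exact: S_f0]).
- have Ru : rootT tp H (fopp ga) (ar tp a b d) by apply: (rootT_ext _ (rootT_ar HL Ra Rb Rd)); pw.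
  by apply: (SlinkGo Hg' Ru Re); left; apply: link_l T1.
- apply: (RuleG Hf (tp_nz1 T1) (rootT_ar HL Ra Rb Rd)); pw.
- have [Sf|Sg] : S f \/ S g by (left; apply: (RuleG Hf (tp_nz1 T1) (rootT_ar HL Ra Rb Rd)); pw).
  1,2: split => //.
  + by apply: (S_link HL HS1 HS0 Sf Hf0 Hg' Rd Re); left.
  + by apply: (S_link HL HS1 HS0 Sg Hg0 Hf Re Rd); right.
- apply: (RuleG Hg' (tp_nz2 T2) (rootT_ar HL Ra Rb Re)); pw.
- have Rv : rootT tp H (fopp ga) (ar tp a b e) by apply: (rootT_ext _ (rootT_ar HL Ra Rb Re)); pw.
  by apply: (SlinkGo Hf Rv Rd); right; apply: link_l T2.
- have [Sf|Sg] : S f \/ S g by (right; apply: (RuleG Hg' (tp_nz2 T2) (rootT_ar HL Ra Rb Re)); pw).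
  1,2: split => //.
  + by apply: (S_link HL HS1 HS0 Sf Hf0 Hg' Rd Re); left.
  + by apply: (S_link HL HS1 HS0 Sg Hg0 Hf Re Rd); right.
- apply: (RuleGp Hg' (ar_nz3 T3) (rootT_tp HL Rd Re Rc)); pw.
- apply: (RuleGp Hf (ar_nz3 T3) (rootT_tp HL Rd Re Rc)); pw.
- have [Sf|Sg] : S f \/ S g.
    have := ar_nz3 T3; rewrite (IdR3 tp d e c) => /nzD [Hm|Hm].
      by left; apply: (SlinkG Hf Rc Rd); right; apply: link_l Hm.
    by right; apply: (SlinkG Hg' Rc Re); right; apply: link_r Hm.
  1,2: split => //.
  + by apply: (S_link HL HS1 HS0 Sf Hf0 Hg' Rd Re); left.
  + by apply: (S_link HL HS1 HS0 Sg Hg0 Hf Re Rd); right.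
Qed.

Lemma p3_sum d e f g : Lam1z tp H f -> Lam1z tp H g -> rootT tp H f d -> rootT tp H g e ->
  tp d e (tp a b c) <> 0 -> S (fadd f g).
Proof.
move=> Hf Hg' Rd Re Hn.
have [Sf Sg] := p3 Hf Hg' Rd Re Hn.
case: (classic (f = F0)) => [Ef|Hf0].
  by have -> : fadd f g = g by apply: functional_extensionality; rewrite Ef; pw.
case: (classic (fadd f g = F0)) => [->|Hfg]; first exact: S_f0.
have E : fadd (fadd f g) F0 = fadd f g by apply: functional_extensionality; pw.
rewrite -E; apply: (S_ext HS1 HS0 Sf Hf0 Hg' (or_introl erefl)).
  exact: (Lam0_link HL (Lam1z_dual Hf) (Lam1z_dual Hg') Hfg Rd Re (link_l Hn)).
apply: (Lam1z_vec _ Hn (rootT_tp HL Rd Re Rx)).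
exact: (isDual_add (isDual_add (Lam1z_dual Hf) (Lam1z_dual Hg')) (@isDual_f0 _ _ tp H)).
Qed.

Lemma p2_first d e f g : Lam1z tp H f -> rootT tp H f d -> rootT tp H g e ->
  tp d (tp a b c) e <> 0 -> S f.
Proof.
move=> Hf Rd Re Hn.
case: (classic (f = F0)) => [->|Hf0]; first exact: S_f0.
move: Hn; rewrite (Id2d HL) => /nzB [T1|/nzB [T2|T2]].
- apply: (RuleG Hf (tp_nz1 T1) (rootT_ar HL Ra Rb Rd)); pw.
- by apply: (SlinkG Hf Rc Rd); right; apply: link_l (tp_nz1 T2).
- by apply: (SlinkG Hf Rc Rd); right; apply: link_l (tp_nz1 T2).
Qed.

Lemma p2_second d e f g : Lam1z tp H f -> Lam1z tp H g -> rootT tp H f d -> rootT tp H g e ->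
  tp d (tp a b c) e <> 0 -> S g.
Proof.
move=> Hf Hg' Rd Re Hn.
case: (classic (g = F0)) => [->|Hg0]; first exact: S_f0.
move: Hn; rewrite (IdR3 tp d (tp a b c) e) => /nzD [Hn|Hn].
  exact: (p3 Hf Hg' Rd Re Hn).2.
move: Hn; rewrite (IdB HL) => /nzB [/nzD [B1|B2]|B3].
- apply: (RuleG Hg' (ar_nz1 B1) (rootT_tp HL Ra Rb Re)); pw.
- by apply: (SlinkG Hg' Rc Re); left; apply: link_r B2.
- by apply: (SlinkG Hg' Rc Re); left; apply: link_r (ar_nz3 B3).
Qed.

Lemma p2_sum d e f g : Lam1z tp H f -> Lam1z tp H g -> rootT tp H f d -> rootT tp H g e ->
  tp d (tp a b c) e <> 0 -> S (fadd f g).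
Proof.
move=> Hf Hg' Rd Re Hn.
case: (classic (f = F0)) => [Ef|Hf0].
  have -> : fadd f g = g by apply: functional_extensionality; rewrite Ef; pw.
  exact: (p2_second Hf Hg' Rd Re Hn).
case: (classic (g = F0)) => [Eg|Hg0].
  have -> : fadd f g = f by apply: functional_extensionality; rewrite Eg; pw.
  exact: (p2_first Hf Rd Re Hn).
have Ef : fadd f F0 = f by apply: functional_extensionality; pw.
have L0f : Lam0 tp H f.
  rewrite -Ef; apply: (Lam0_link HL (Lam1z_dual Hf) (@isDual_f0 _ _ tp H) _ Rd Rx (link_l Hn)).
  by rewrite Ef.
have Rs : rootT tp H (fadd f g) (tp d (tp a b c) e).
  by apply: (rootT_ext _ (rootT_tp HL Rd Rx Re)); pw.
apply: (S_hop HS1 HS0 (p2_first Hf Rd Re Hn) Hf0 L0f Hg').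
exact: (Lam1z_vec (isDual_add (Lam1z_dual Hf) (Lam1z_dual Hg')) Hn Rs).
Qed.

End Main.


Theorem lemma3p4 (K : fieldType) (T : lmodType K) (tp : T -> T -> T -> T)
    (H : L0 T -> Prop) (a0 al be ga de ep : L0 T -> K) :
  isLTS tp -> maxAbSub tp H -> isSplit tp H ->
  symmetricR (Lam1 tp H) -> symmetricR (Lam0 tp H) ->
  Lam1 tp H a0 ->
  Lam1connz tp H a0 al -> Lam1connz tp H a0 be -> Lam1connz tp H a0 ga ->
  fadd (fadd al be) ga = @f0 K T ->
  Lam1z tp H de -> Lam1z tp H ep ->
  let concl := Lam1connz tp H a0 de /\ Lam1connz tp H a0 ep /\
               Lam1connz tp H a0 (fadd de ep) in
  ((exists a b c d e, rootT tp H al a /\ rootT tp H be b /\ rootT tp H ga c /\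
       rootT tp H de d /\ rootT tp H ep e /\ tp (tp a b c) d e <> 0) -> concl) /\
  ((exists a b c d e, rootT tp H al a /\ rootT tp H be b /\ rootT tp H ga c /\
       rootT tp H de d /\ rootT tp H ep e /\ tp d (tp a b c) e <> 0) -> concl) /\
  ((exists a b c d e, rootT tp H al a /\ rootT tp H be b /\ rootT tp H ga c /\
       rootT tp H de d /\ rootT tp H ep e /\ tp d e (tp a b c) <> 0) -> concl).
Proof.
move=> HL _ HSp HS1 HS0 _ Hal Hbe Hga Hsum Hde Hep concl; rewrite /concl.
split; [|split]; move=> [a [b [c [d [e [Ra [Rb [Rc [Rd [Re Hn]]]]]]]]]].
- have Hx := tp_nz1 HL Hn.
  split; [|split].
  + exact: (p1_first HL HSp HS1 HS0 Hal Hbe Hga Hsum Ra Rb Rc Hx Hde Rd Re Hn).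
  + exact: (p1_second HL HSp HS1 HS0 Hal Hbe Hga Hsum Ra Rb Rc Hx Hde Hep Rd Re Hn).
  + exact: (p1_sum HL HSp HS1 HS0 Hal Hbe Hga Hsum Ra Rb Rc Hx Hde Hep Rd Re Hn).
- have Hx := tp_nz2 HL Hn.
  split; [|split].
  + exact: (p2_first HL HSp HS1 HS0 Hal Hbe Hga Hsum Ra Rb Rc Hx Hde Rd Re Hn).
  + exact: (p2_second HL HSp HS1 HS0 Hal Hbe Hga Hsum Ra Rb Rc Hx Hde Hep Rd Re Hn).
  + exact: (p2_sum HL HSp HS1 HS0 Hal Hbe Hga Hsum Ra Rb Rc Hx Hde Hep Rd Re Hn).
- have Hx := tp_nz3 HL Hn.
  have [S1 S2] := p3 HL HSp HS1 HS0 Hal Hbe Hga Hsum Ra Rb Rc Hx Hde Hep Rd Re Hn.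
  split; [exact: S1|split; [exact: S2|]].
  exact: (p3_sum HL HSp HS1 HS0 Hal Hbe Hga Hsum Ra Rb Rc Hx Hde Hep Rd Re Hn).
Qed.
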